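(* Call an edge $(u,v)$ of $G(n,r)$ long if $|uv|\ge\sqrt{\frac{8\ln n}{n}}$. Then w.h.p. none of the long edges of $G(n,r)$ is free (i.e. every long edge is crossed by some other edge of $G(n,r)$).
   Context: Here the $n$ points of $G(n,r)$ are chosen independently and uniformly at random on the unit torus (the unit square with wraparound); two points are joined by a straight-line edge iff their distance is at most $r=r(n)$. An edge of a geometric graph is free if its interior is not intersected by any other edge of the graph. ''W.h.p.'' means with probability tending to $1$ as $n\to\infty$. *)

(* Defs.v *)
From Stdlib Require Import Reals Lra.
Open Scope R_scope.

(** * Points on the unit torus [0,1)^2 *)
Definition point := (R * R)%type.

(** A configuration of points: only the first n entries are used. *)
Definition config := nat -> point.

(** Wrapped coordinate difference: the representative of [d] modulo 1
    lying in [-1/2, 1/2). *)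
Definition wrap (d : R) : R := d - IZR (up (d - /2)).

Definition tdisp (u v : point) : point :=
  (wrap (fst v - fst u), wrap (snd v - snd u)).

Definition tdist (u v : point) : R :=
  let d := tdisp u v in sqrt (fst d * fst d + snd d * snd d).

Definition tor_eq (a b : point) : Prop :=
  exists k l : Z, fst a - fst b = IZR k /\ snd a - snd b = IZR l.

(** The point at parameter t of the straight-line (geodesic) edge from u to v. *)
Definition seg_pt (u v : point) (t : R) : point :=
  (fst u + t * fst (tdisp u v), snd u + t * snd (tdisp u v)).

Definition is_edge (n : nat) (r : R) (p : config) (i j : nat) : Prop :=
  (i < n)%nat /\ (j < n)%nat /\ i <> j /\ tdist (p i) (p j) <= r.

Definition is_long (n : nat) (p : config) (i j : nat) : Prop :=
  tdist (p i) (p j) >= sqrt (8 * ln (INR n) / INR n).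

Definition crossed (n : nat) (r : R) (p : config) (i j : nat) : Prop :=
  exists k l : nat,
    is_edge n r p k l /\
    ~ ((k = i /\ l = j) \/ (k = j /\ l = i)) /\
    exists s t : R, 0 < s < 1 /\ 0 < t < 1 /\
      tor_eq (seg_pt (p i) (p j) s) (seg_pt (p k) (p l) t).

Definition free_edge (n : nat) (r : R) (p : config) (i j : nat) : Prop :=
  is_edge n r p i j /\ ~ crossed n r p i j.

Definition bad_event (n : nat) (r : R) (p : config) : Prop :=
  exists i j : nat, free_edge n r p i j /\ is_long n p i j.

(** * Lebesgue outer measure on the sample space [0,1)^(2n) *)
Definition in_cube (n : nat) (p : config) : Prop :=
  forall i, (i < n)%nat ->
    0 <= fst (p i) < 1 /\ 0 <= snd (p i) < 1.

Fixpoint prodR (n : nat) (f : nat -> R) : R :=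
  match n with
  | O => 1
  | S m => prodR m f * f m
  end.

Record box := mkBox { lo : config; hi : config }.

Definition box_ok (n : nat) (B : box) : Prop :=
  forall i, (i < n)%nat ->
    fst (lo B i) <= fst (hi B i) /\ snd (lo B i) <= snd (hi B i).

Definition box_vol (n : nat) (B : box) : R :=
  prodR n (fun i => (fst (hi B i) - fst (lo B i)) * (snd (hi B i) - snd (lo B i))).

Definition in_box (n : nat) (B : box) (p : config) : Prop :=
  forall i, (i < n)%nat ->
    fst (lo B i) <= fst (p i) <= fst (hi B i) /\
    snd (lo B i) <= snd (p i) <= snd (hi B i).

(** [outer_le n S eps]: the Lebesgue outer measure of S (a set of
    configurations of n points, only the first n coordinates matter) is at
    most eps, i.e. S is covered by countably many boxes of total volume <= eps. *)
Definition outer_le (n : nat) (S : config -> Prop) (eps : R) : Prop :=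
  exists Bs : nat -> box,
    (forall k, box_ok n (Bs k)) /\
    (forall p, S p -> exists k, in_box n (Bs k) p) /\
    (forall m, sum_f_R0 (fun k => box_vol n (Bs k)) m <= eps).

(** With n i.i.d. uniform points on the torus, the probability of the event E n
    tends to 0 (the events considered are measurable, so outer measure =
    probability). *)
Definition prob_tends_to_0 (E : nat -> config -> Prop) : Prop :=
  forall eps : R, eps > 0 -> exists N : nat, forall n : nat, (n >= N)%nat ->
    outer_le n (fun p => in_cube n p /\ E n p) eps.

Definition whp (P : nat -> config -> Prop) : Prop :=
  prob_tends_to_0 (fun n p => ~ P n p).

(* Main.v *)
Require Import Defs.
From Stdlib Require Import Reals Lra Lia Psatz ZArith Arith List Classical.
Open Scope R_scope.

Definition zerobox : box := mkBox (fun _ => (0,0)) (fun _ => (0,0)).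

Definition vsum (n : nat) (l : list box) : R :=
  fold_right (fun b acc => box_vol n b + acc) 0 l.

Lemma prodR_ext n f g : (forall i, (i < n)%nat -> f i = g i) -> prodR n f = prodR n g.
Proof.
  induction n; simpl; intros H; auto.
  rewrite IHn by (intros; apply H; lia). rewrite H by lia. auto.
Qed.

Lemma prodR_nonneg n f : (forall i, (i < n)%nat -> 0 <= f i) -> 0 <= prodR n f.
Proof.
  induction n; simpl; intros H; [lra|].
  apply Rmult_le_pos; [apply IHn; intros; apply H; lia| apply H; lia].
Qed.

Lemma box_vol_nonneg n b : box_ok n b -> 0 <= box_vol n b.
Proof.
  intros H. unfold box_vol. apply prodR_nonneg. intros i Hi.
  destruct (H i Hi). apply Rmult_le_pos; lra.
Qed.

Lemma zerobox_vol n : (0 < n)%nat -> box_vol n zerobox = 0.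
Proof.
  destruct n; [lia|]. intros _. unfold box_vol. simpl. ring.
Qed.

Lemma zerobox_ok n : box_ok n zerobox.
Proof. intros i _; simpl; lra. Qed.

Lemma sum_nth_le (l : list R) m :
  Forall (fun x => 0 <= x) l ->
  sum_f_R0 (fun k => nth k l 0) m <= fold_right Rplus 0 l.
Proof.
  revert m; induction l as [|a l IH]; intros m Hf.
  - simpl. induction m; simpl; lra.
  - inversion Hf; subst. simpl.
    destruct m.
    + simpl. assert (0 <= fold_right Rplus 0 l).
      { clear -H2. induction l; simpl; [lra|]. inversion H2; subst.
        specialize (IHl H3). lra. }
      lra.
    + rewrite decomp_sum by lia. simpl.
      specialize (IH m H2). lra.
Qed.

Lemma outer_of_list n (S : config -> Prop) l eps :
  (0 < n)%nat -> Forall (box_ok n) l ->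
  (forall p, S p -> exists b, In b l /\ in_box n b p) ->
  vsum n l <= eps -> outer_le n S eps.
Proof.
  intros Hn Hok Hcov Hs.
  exists (fun k => nth k l zerobox). split; [|split].
  - intros k. destruct (Nat.lt_ge_cases k (length l)).
    + rewrite Forall_forall in Hok. apply Hok. apply nth_In; auto.
    + rewrite nth_overflow by auto. apply zerobox_ok.
  - intros p Hp. destruct (Hcov p Hp) as [b [Hb Hib]].
    destruct (In_nth l b zerobox Hb) as [k [_ Hk]]. exists k. rewrite Hk. auto.
  - intros m.
    assert (E : forall k, box_vol n (nth k l zerobox) = nth k (map (box_vol n) l) 0).
    { intros k. transitivity (nth k (map (box_vol n) l) (box_vol n zerobox)).
      - symmetry; apply map_nth.
      - rewrite zerobox_vol; auto. }
    apply Rle_trans with (fold_right Rplus 0 (map (box_vol n) l)).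
    + rewrite (sum_eq _ (fun k => nth k (map (box_vol n) l) 0)).
      2:{ intros; apply E. }
      apply sum_nth_le. rewrite Forall_forall in *. intros x Hx.
      apply in_map_iff in Hx. destruct Hx as [b [<- Hb]]. apply box_vol_nonneg; auto.
    + replace (fold_right Rplus 0 (map (box_vol n) l)) with (vsum n l); auto.
      unfold vsum. clear. induction l; simpl; auto. rewrite IHl; auto.
Qed.

Definition rect := (point * point)%type.
Definition rarea (c : rect) : R :=
  (fst (snd c) - fst (fst c)) * (snd (snd c) - snd (fst c)).
Definition rok (c : rect) : Prop := fst (fst c) <= fst (snd c) /\ snd (fst c) <= snd (snd c).
Definition in_rect (c : rect) (x : point) : Prop :=
  fst (fst c) <= fst x <= fst (snd c) /\ snd (fst c) <= snd x <= snd (snd c).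
Definition csum (l : list rect) : R := fold_right (fun c acc => rarea c + acc) 0 l.

Definition ext (m : nat) (b : box) (c : rect) : box :=
  mkBox (fun i => if Nat.eqb i m then fst c else lo b i)
        (fun i => if Nat.eqb i m then snd c else hi b i).

Fixpoint prodboxes (n : nat) (C : list rect) : list box :=
  match n with
  | O => zerobox :: nil
  | S m => flat_map (fun b => map (fun c => ext m b c) C) (prodboxes m C)
  end.

Lemma vol_ext m b c : box_vol (S m) (ext m b c) = box_vol m b * rarea c.
Proof.
  unfold box_vol. simpl. rewrite Nat.eqb_refl. f_equal.
  apply prodR_ext. intros i Hi. simpl.
  destruct (Nat.eqb_spec i m); [lia|]. auto.
Qed.

Lemma vsum_app n l1 l2 : vsum n (l1 ++ l2) = vsum n l1 + vsum n l2.
Proof. induction l1; simpl; [lra|]. rewrite IHl1; ring. Qed.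

Lemma vsum_map_ext m b C : vsum (S m) (map (fun c => ext m b c) C) = box_vol m b * csum C.
Proof. induction C; simpl; [ring|]. rewrite IHC, vol_ext. ring. Qed.

Lemma vsum_prodboxes n C : vsum n (prodboxes n C) = csum C ^ n.
Proof.
  induction n; simpl.
  - unfold vsum, box_vol; simpl; ring.
  - rewrite <- IHn. generalize (prodboxes n C). intros l.
    induction l; simpl; [unfold vsum; simpl; ring|].
    rewrite vsum_app, vsum_map_ext, IHl. unfold vsum; simpl. ring.
Qed.

Lemma prodboxes_ok n C : Forall rok C -> Forall (box_ok n) (prodboxes n C).
Proof.
  intros HC. rewrite Forall_forall in *. induction n; simpl.
  - intros x [<-|[]]. apply zerobox_ok.
  - intros x Hx. apply in_flat_map in Hx. destruct Hx as [b [Hb Hx]].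
    apply in_map_iff in Hx. destruct Hx as [c [<- Hc]].
    intros i Hi. simpl. destruct (Nat.eqb_spec i n).
    + apply HC; auto.
    + apply IHn; auto. lia.
Qed.

Lemma prodboxes_cover n C p :
  (forall i, (i < n)%nat -> exists c, In c C /\ in_rect c (p i)) ->
  exists b, In b (prodboxes n C) /\ in_box n b p.
Proof.
  induction n; intros H.
  - exists zerobox. split; [simpl; auto|]. intros i Hi; lia.
  - destruct IHn as [b [Hb Hib]]. { intros i Hi; apply H; lia. }
    destruct (H n (Nat.lt_succ_diag_r n)) as [c [Hc Hic]].
    exists (ext n b c). split.
    + simpl. apply in_flat_map. exists b. split; auto. apply in_map; auto.
    + intros i Hi. simpl. destruct (Nat.eqb_spec i n).
      * subst. exact Hic.
      * apply Hib. lia.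
Qed.

Definition swp (x : point) : point := (snd x, fst x).
Definition swapc (p : config) : config := fun i => swp (p i).
Definition swapbox (b : box) : box := mkBox (fun i => swp (lo b i)) (fun i => swp (hi b i)).

Lemma swap_vol n b : box_vol n (swapbox b) = box_vol n b.
Proof. unfold box_vol. apply prodR_ext. intros; simpl; ring. Qed.

Lemma vsum_swap n l : vsum n (map swapbox l) = vsum n l.
Proof. induction l; simpl; auto. unfold vsum in *; simpl. rewrite IHl, swap_vol; auto. Qed.

Definition cellrect (N a b : nat) : rect :=
  ((INR a / INR N, INR b / INR N), (INR (S a) / INR N, INR (S b) / INR N)).

Definition allowed (N w h a0 : nat) (rho : nat -> nat) : list rect :=
  flat_map (fun c => map (fun r => cellrect N ((a0 + c) mod N)
                               (if c <? w then (rho c + r) mod N else r))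
                         (if c <? w then seq h (N - h) else seq 0 N)) (seq 0 N).

Definition inS (N w h a0 : nat) (rho : nat -> nat) (a b : nat) : Prop :=
  let c := ((a + N - a0) mod N)%nat in (c < w)%nat /\ ((b + N - rho c) mod N < h)%nat.

Definition cellidx (N : nat) (x : R) : nat := Z.to_nat (Int_part (x * INR N)).

Lemma csum_const l a : (forall c, In c l -> rarea c = a) -> csum l = INR (length l) * a.
Proof.
  induction l; intros H; simpl; [ring|].
  rewrite IHl by (intros; apply H; simpl; auto). rewrite H by (simpl; auto).
  destruct (length l); simpl; ring.
Qed.

Lemma cellrect_area N a b : (0 < N)%nat -> rarea (cellrect N a b) = / (INR N * INR N).
Proof.
  intros HN. unfold rarea, cellrect; cbn [fst snd]. rewrite !S_INR.
  assert (0 < INR N) by (apply lt_0_INR; auto). field. lra.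
Qed.

Lemma cellrect_ok N a b : (0 < N)%nat -> rok (cellrect N a b).
Proof.
  intros HN. unfold rok, cellrect; cbn [fst snd]. rewrite !S_INR.
  assert (0 < INR N) by (apply lt_0_INR; auto).
  split; unfold Rdiv; apply Rmult_le_compat_r; try (left; apply Rinv_0_lt_compat); lra.
Qed.

Lemma length_flat_map_const {A B} (f : A -> list B) l k :
  (forall x, In x l -> length (f x) = k) -> length (flat_map f l) = (length l * k)%nat.
Proof.
  induction l; intros H; simpl; auto. rewrite length_app, IHl by (intros; apply H; simpl; auto).
  rewrite H by (simpl; auto). lia.
Qed.

Lemma allowed_length N w h a0 rho : (w <= N)%nat -> (h <= N)%nat ->
  length (allowed N w h a0 rho) = (w * (N - h) + (N - w) * N)%nat.
Proof.
  intros Hw Hh. unfold allowed.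
  assert (E : seq 0 N = seq 0 w ++ seq w (N - w)).
  { replace N with (w + (N - w))%nat at 1 by lia. rewrite seq_app; auto. }
  rewrite E, flat_map_app, length_app.
  rewrite (length_flat_map_const _ _ (N - h)).
  2:{ intros x Hx. apply in_seq in Hx. rewrite length_map.
      destruct (Nat.ltb_spec x w); [|lia]. apply length_seq. }
  rewrite (length_flat_map_const _ _ N).
  2:{ intros x Hx. apply in_seq in Hx. rewrite length_map.
      destruct (Nat.ltb_spec x w); [lia|]. rewrite ?length_app, !length_seq; lia. }
  rewrite !length_seq. lia.
Qed.

Lemma allowed_csum N w h a0 rho : (0 < N)%nat -> (w <= N)%nat -> (h <= N)%nat ->
  csum (allowed N w h a0 rho) = 1 - INR w * INR h / (INR N * INR N).
Proof.
  intros HN Hw Hh. rewrite (csum_const _ (/ (INR N * INR N))).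
  2:{ intros c Hc. unfold allowed in Hc. apply in_flat_map in Hc.
      destruct Hc as [x [_ Hc]]. apply in_map_iff in Hc. destruct Hc as [r [<- _]].
      apply cellrect_area; auto. }
  rewrite allowed_length by auto.
  assert (0 < INR N) by (apply lt_0_INR; auto).
  rewrite plus_INR, !mult_INR, !minus_INR by auto. field. lra.
Qed.

Lemma allowed_ok N w h a0 rho : (0 < N)%nat -> Forall rok (allowed N w h a0 rho).
Proof.
  intros HN. rewrite Forall_forall. intros c Hc. unfold allowed in Hc. apply in_flat_map in Hc.
  destruct Hc as [x [_ Hc]]. apply in_map_iff in Hc. destruct Hc as [r [<- _]].
  apply cellrect_ok; auto.
Qed.

Lemma cellidx_spec N x : (0 < N)%nat -> 0 <= x < 1 ->
  (cellidx N x < N)%nat /\ INR (cellidx N x) / INR N <= x <= INR (S (cellidx N x)) / INR N.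
Proof.
  intros HN Hx. assert (0 < INR N) by (apply lt_0_INR; auto).
  unfold cellidx. destruct (base_Int_part (x * INR N)) as [H1 H2].
  assert (0 <= x * INR N) by (apply Rmult_le_pos; lra).
  assert (x * INR N < INR N) by (rewrite <- (Rmult_1_l (INR N)) at 2; apply Rmult_lt_compat_r; lra).
  set (z := Int_part (x * INR N)) in *.
  assert (Hz0 : (0 <= z)%Z).
  { assert (-1 < z)%Z by (apply lt_IZR; simpl; lra). lia. }
  assert (Hz : INR (Z.to_nat z) = IZR z).
  { rewrite INR_IZR_INZ. f_equal. apply Z2Nat.id. exact Hz0. }
  rewrite S_INR, Hz. split.
  - apply INR_lt. rewrite Hz. lra.
  - split.
    + apply (Rmult_le_reg_r (INR N)); auto. unfold Rdiv. rewrite Rmult_assoc, Rinv_l; lra.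
    + apply (Rmult_le_reg_r (INR N)); auto. unfold Rdiv. rewrite Rmult_assoc, Rinv_l; lra.
Qed.

Lemma mod_back a a0 N : (0 < N)%nat -> (a < N)%nat -> (a0 < N)%nat ->
  ((a0 + (a + N - a0) mod N) mod N = a)%nat.
Proof.
  intros HN Ha Ha0. rewrite Nat.Div0.add_mod_idemp_r.
  replace (a0 + (a + N - a0))%nat with (a + 1 * N)%nat by lia.
  rewrite Nat.Div0.mod_add. apply Nat.mod_small; auto.
Qed.

Lemma allowed_cover N w h a0 rho x : (0 < N)%nat -> (a0 < N)%nat -> (forall c, (rho c < N)%nat) ->
  0 <= fst x < 1 -> 0 <= snd x < 1 ->
  ~ inS N w h a0 rho (cellidx N (fst x)) (cellidx N (snd x)) ->
  exists c, In c (allowed N w h a0 rho) /\ in_rect c x.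
Proof.
  intros HN Ha0 Hrho Hx1 Hx2 Hn.
  destruct (cellidx_spec N (fst x) HN Hx1) as [Ha [Hxa1 Hxa2]].
  destruct (cellidx_spec N (snd x) HN Hx2) as [Hb [Hxb1 Hxb2]].
  set (a := cellidx N (fst x)) in *. set (b := cellidx N (snd x)) in *.
  set (c := ((a + N - a0) mod N)%nat).
  assert (Hc : (c < N)%nat) by (apply Nat.mod_upper_bound; lia).
  assert (Hca : ((a0 + c) mod N)%nat = a) by (apply mod_back; auto).
  destruct (Nat.ltb_spec c w) as [Hcw|Hcw].
  - set (r := ((b + N - rho c) mod N)%nat).
    assert (Hr : (r < N)%nat) by (apply Nat.mod_upper_bound; lia).
    assert (Hrh : (h <= r)%nat).
    { destruct (Nat.lt_ge_cases r h); auto. exfalso. apply Hn. split; auto. }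
    exists (cellrect N a b). split.
    + unfold allowed. apply in_flat_map. exists c. split; [apply in_seq; lia|].
      apply in_map_iff. exists r. rewrite Hca. destruct (Nat.ltb_spec c w); [|lia].
      split.
      * f_equal. apply mod_back; auto.
      * apply in_seq. lia.
    + unfold in_rect, cellrect; cbn [fst snd]. lra.
  - exists (cellrect N a b). split.
    + unfold allowed. apply in_flat_map. exists c. split; [apply in_seq; lia|].
      apply in_map_iff. exists b. rewrite Hca. destruct (Nat.ltb_spec c w); [lia|].
      split; auto. apply in_seq. lia.
    + unfold in_rect, cellrect; cbn [fst snd]. lra.
Qed.

Lemma wrap_id d : -/2 <= d < /2 -> wrap d = d.
Proof.
  intros H. unfold wrap. rewrite <- (tech_up (d - /2) 0); simpl; lra.
Qed.

Lemma wrap_shift d k : wrap (d + IZR k) = wrap d.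
Proof.
  unfold wrap. destruct (archimed (d - /2)) as [H1 H2].
  rewrite <- (tech_up (d + IZR k - /2) (up (d - /2) + k)).
  - rewrite plus_IZR. ring.
  - rewrite plus_IZR. lra.
  - rewrite plus_IZR. lra.
Qed.

Lemma wrap_range d : -/2 <= wrap d < /2.
Proof.
  unfold wrap. destruct (archimed (d - /2)) as [H1 H2]. lra.
Qed.

Lemma wrap_eq d : exists k, wrap d = d + IZR k.
Proof. unfold wrap. exists (- up (d - /2))%Z. rewrite opp_IZR. ring. Qed.

Lemma IZR_small z : -1 < IZR z < 1 -> z = 0%Z.
Proof.
  intros [H1 H2]. apply lt_IZR in H1. apply lt_IZR in H2. lia.
Qed.

Definition cA := 34/100.
Definition cB := 12/100.
Definition cdl := 1/100.
Definition cH := 36/100.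

Lemma dist_bound s L X1 X2 Z1 Z2 al be :
  0 < L -> -1 <= s <= 1 ->
  ((0 <= s /\ al = cA /\ be = cB) \/ (s < 0 /\ al = cB /\ be = cA)) ->
  - al * L <= X1 <= be * L -> cdl * L <= Z1 <= cH * L ->
  - be * L <= X2 <= al * L -> - cH * L <= Z2 <= - cdl * L ->
  (X1 - X2) ^ 2 + ((Z1 - Z2) + s * (X1 - X2)) ^ 2 <= 99/100 * L ^ 2.
Proof.
  unfold cA, cB, cdl, cH. intros HL Hs Hc H1 H2 H3 H4.
  set (dx := X1 - X2). set (dz := Z1 - Z2).
  assert (Hdz : 2/100 * L <= dz <= 72/100 * L) by (unfold dz; lra).
  destruct Hc as [[Hs0 [-> ->]] | [Hs0 [-> ->]]].
  - assert (Hdx : - 68/100 * L <= dx <= 24/100 * L) by (unfold dx; lra).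
    destruct (Rle_or_lt 0 dx).
    + assert (0 <= s * dx <= 24/100 * L).
      { split; [apply Rmult_le_pos; lra|]. apply Rle_trans with (1 * dx); [apply Rmult_le_compat_r; lra| lra]. }
      assert (0 <= dz + s * dx <= 96/100 * L) by lra.
      assert (dx ^ 2 <= (24/100 * L) ^ 2) by (apply pow_incr; lra).
      assert ((dz + s * dx) ^ 2 <= (96/100*L) ^ 2) by (apply pow_incr; lra).
      nra.
    + assert (-68/100 * L <= s * dx <= 0).
      { split; [|assert (0 <= s * (- dx)) by (apply Rmult_le_pos; lra); lra].
        assert (s * (-dx) <= 1 * (- dx)) by (apply Rmult_le_compat_r; lra). lra. }
      assert (Rabs (dz + s * dx) <= 72/100 * L) by (apply Rabs_le; lra).
      assert (Rabs dx <= 68/100 * L) by (apply Rabs_le; lra).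
      assert (dx ^ 2 <= (68/100 * L) ^ 2) by (rewrite <- (pow2_abs dx); apply pow_incr; split; [apply Rabs_pos|lra]).
      assert ((dz + s*dx) ^ 2 <= (72/100 * L) ^ 2) by (rewrite <- (pow2_abs (dz + s*dx)); apply pow_incr; split; [apply Rabs_pos|lra]).
      nra.
  - assert (Hdx : - 24/100 * L <= dx <= 68/100 * L) by (unfold dx; lra).
    destruct (Rle_or_lt dx 0).
    + assert (0 <= s * dx <= 24/100 * L).
      { split; [assert (0 <= (-s) * (- dx)) by (apply Rmult_le_pos; lra); lra|].
        assert ((-s) * (-dx) <= 1 * (- dx)) by (apply Rmult_le_compat_r; lra). lra. }
      assert (0 <= dz + s * dx <= 96/100 * L) by lra.
      assert (dx ^ 2 <= (24/100 * L) ^ 2) by (rewrite <- (pow2_abs dx); apply pow_incr; split; [apply Rabs_pos|apply Rabs_le; lra]).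
      assert ((dz + s * dx) ^ 2 <= (96/100*L) ^ 2) by (apply pow_incr; lra).
      nra.
    + assert (-68/100 * L <= s * dx <= 0).
      { split; [|assert (0 <= (-s) * dx) by (apply Rmult_le_pos; lra); lra].
        assert ((-s) * dx <= 1 * dx) by (apply Rmult_le_compat_r; lra). lra. }
      assert (dx ^ 2 <= (68/100 * L) ^ 2) by (apply pow_incr; lra).
      assert ((dz + s*dx) ^ 2 <= (72/100 * L) ^ 2) by (rewrite <- (pow2_abs (dz + s*dx)); apply pow_incr; split; [apply Rabs_pos|apply Rabs_le; lra]).
      nra.
Qed.

Lemma abs_le_inv x a : Rabs x <= a -> -a <= x <= a.
Proof. unfold Rabs; destruct Rcase_abs; lra. Qed.

Lemma not_endpoint L d1 d2 s t zx zy X Z :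
  0 < L <= 1/100 -> Rabs d1 <= /2 -> s * d1 = d2 -> (t = 0 \/ t = 1) ->
  X = (t - /2) * d1 + IZR zx ->
  Z = (t - /2) * d2 + IZR zy - s * X ->
  Rabs X <= 34/100 * L -> 1/100 * L <= Rabs Z <= 36/100 * L -> False.
Proof.
  intros HL Hd1 Hs Ht HX HZ HXb HZb.
  assert (zx = 0%Z).
  { apply IZR_small. assert (Rabs ((t - /2) * d1) <= /4).
    { rewrite Rabs_mult.
      assert (Rabs (t - /2) = /2) by (destruct Ht as [->| ->]; [rewrite Rabs_left|rewrite Rabs_right]; lra).
      rewrite H. lra. }
    apply abs_le_inv in HXb. apply abs_le_inv in H. lra. }
  subst zx. simpl in HX.
  assert (HZ' : Z = IZR zy) by (rewrite HZ, HX; nra).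
  assert (zy = 0%Z).
  { apply IZR_small. rewrite <- HZ'. destruct HZb. apply abs_le_inv in H0. lra. }
  subst zy. simpl in HZ'. rewrite HZ', Rabs_R0 in HZb. lra.
Qed.

Lemma crossing n r p i j k l (z1x z1y z2x z2y : Z) L al be :
  (i < n)%nat -> (j < n)%nat -> i <> j -> (k < n)%nat -> (l < n)%nat ->
  tdist (p i) (p j) <= r -> 0 < L <= 1/100 ->
  let d1 := fst (tdisp (p i) (p j)) in let d2 := snd (tdisp (p i) (p j)) in
  L ^ 2 <= d1 ^ 2 + d2 ^ 2 -> d2 ^ 2 <= d1 ^ 2 ->
  let s := d2 / d1 in
  let M1 := fst (p i) + d1 / 2 in let M2 := snd (p i) + d2 / 2 in
  let X1 := fst (p k) + IZR z1x - M1 in let Z1 := snd (p k) + IZR z1y - M2 - s * X1 in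
  let X2 := fst (p l) + IZR z2x - M1 in let Z2 := snd (p l) + IZR z2y - M2 - s * X2 in
  ((0 <= s /\ al = cA /\ be = cB) \/ (s < 0 /\ al = cB /\ be = cA)) ->
  - al * L <= X1 <= be * L -> cdl * L <= Z1 <= cH * L ->
  - be * L <= X2 <= al * L -> - cH * L <= Z2 <= - cdl * L ->
  crossed n r p i j.
Proof.
  intros Hi Hj Hij Hk Hl Hr HL d1 d2 HLd Hd21 s M1 M2 X1 Z1 X2 Z2 Hc HX1 HZ1 HX2 HZ2.
  assert (Hd1 : d1 <> 0) by (intro E; rewrite E in *; nra).
  assert (Hsd : s * d1 = d2) by (unfold s; field; auto).
  assert (Hs : -1 <= s <= 1).
  { assert (s ^ 2 <= 1).
    { unfold s. unfold Rdiv. rewrite Rpow_mult_distr, pow_inv.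
      apply (Rmult_le_reg_r (d1 ^ 2)); [nra|]. rewrite Rmult_assoc, Rinv_l by (apply pow_nonzero; auto). lra. }
    nra. }
  assert (Hal : al <= 34/100 /\ be <= 34/100) by (unfold cA, cB in Hc; lra).
  unfold cA, cB, cdl, cH in *.
  set (Dx := X2 - X1). set (Dy := (Z2 + s * X2) - (Z1 + s * X1)).
  assert (HD : Dx ^ 2 + Dy ^ 2 <= 99/100 * L ^ 2).
  { replace (Dx ^ 2 + Dy ^ 2) with ((X1 - X2) ^ 2 + ((Z1 - Z2) + s * (X1 - X2)) ^ 2)
      by (unfold Dx, Dy; ring).
    eapply dist_bound; eauto. unfold cA, cB; lra. }
  assert (HDx : -/2 <= Dx < /2) by nra.
  assert (HDy : -/2 <= Dy < /2) by nra.
  assert (Htd : tdisp (p k) (p l) = (Dx, Dy)).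
  { unfold tdisp. f_equal.
    - replace (fst (p l) - fst (p k)) with (Dx + IZR (z1x - z2x)).
      + rewrite wrap_shift. apply wrap_id; auto.
      + rewrite minus_IZR. unfold Dx, X1, X2. ring.
    - replace (snd (p l) - snd (p k)) with (Dy + IZR (z1y - z2y)).
      + rewrite wrap_shift. apply wrap_id; auto.
      + rewrite minus_IZR. unfold Dy, Z1, Z2, X1, X2. ring. }
  destruct (wrap_range (fst (p j) - fst (p i))) as [Hw1 Hw1'].
  destruct (wrap_eq (fst (p j) - fst (p i))) as [q1 Hq1].
  destruct (wrap_eq (snd (p j) - snd (p i))) as [q2 Hq2].
  assert (Hd1e : d1 = fst (p j) - fst (p i) + IZR q1) by (unfold d1; simpl; auto).
  assert (Hd2e : d2 = snd (p j) - snd (p i) + IZR q2) by (unfold d2; simpl; auto).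
  assert (Hd1b : Rabs d1 <= /2) by (apply Rabs_le; unfold d1; simpl; lra).
  assert (HX1b : Rabs X1 <= 34/100 * L) by (apply Rabs_le; nra).
  assert (HX2b : Rabs X2 <= 34/100 * L) by (apply Rabs_le; nra).
  assert (HZ1b : 1/100 * L <= Rabs Z1 <= 36/100 * L) by (rewrite Rabs_right by lra; lra).
  assert (HZ2b : 1/100 * L <= Rabs Z2 <= 36/100 * L) by (rewrite Rabs_left by lra; lra).
  assert (Hne : forall m zx zy, (m = i \/ m = j) ->
            Rabs (fst (p m) + IZR zx - M1) <= 34/100 * L ->
            1/100 * L <= Rabs (snd (p m) + IZR zy - M2 - s * (fst (p m) + IZR zx - M1)) <= 36/100 * L ->
            False).
  { intros m zx zy [-> | ->] Hxb Hzb.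
    - apply (not_endpoint L d1 d2 s 0 zx zy (fst (p i) + IZR zx - M1)
         (snd (p i) + IZR zy - M2 - s * (fst (p i) + IZR zx - M1)) HL Hd1b Hsd (or_introl eq_refl));
      [unfold M1; field | unfold M2; field | exact Hxb | exact Hzb].
    - apply (not_endpoint L d1 d2 s 1 (zx - q1) (zy - q2) (fst (p j) + IZR zx - M1)
         (snd (p j) + IZR zy - M2 - s * (fst (p j) + IZR zx - M1)) HL Hd1b Hsd (or_intror eq_refl));
      [unfold M1; rewrite minus_IZR, Hd1e; field | unfold M2; rewrite minus_IZR, Hd2e; field
      | exact Hxb | exact Hzb]. }
  set (t := Z1 / (Z1 - Z2)).
  assert (Ht : 0 < t < 1).
  { unfold t. split.
    - apply Rdiv_lt_0_compat; lra.
    - apply (Rmult_lt_reg_r (Z1 - Z2)); [lra|]. unfold Rdiv. rewrite Rmult_assoc, Rinv_l by lra. lra. }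
  set (XP := X1 + t * (X2 - X1)).
  assert (HXP : Rabs XP <= 34/100 * L).
  { apply Rabs_le. apply abs_le_inv in HX1b. apply abs_le_inv in HX2b. unfold XP. split; nra. }
  assert (HZP : Z1 + t * (Z2 - Z1) = 0) by (unfold t; field; lra).
  assert (Hd1L : (68/100 * L) ^ 2 < d1 ^ 2) by nra.
  assert (Hsig : 0 < /2 + XP / d1 < 1).
  { assert (Rabs (XP / d1) < /2).
    { unfold Rdiv. rewrite Rabs_mult, Rabs_inv.
      assert (0 < Rabs d1) by (apply Rabs_pos_lt; auto).
      apply (Rmult_lt_reg_r (Rabs d1)); auto. rewrite Rmult_assoc, Rinv_l by lra.
      assert (68/100 * L < Rabs d1).
      { apply Rsqr_incrst_0.
        - unfold Rsqr. rewrite <- Rabs_mult. rewrite Rabs_right by nra. nra.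
        - lra.
        - apply Rabs_pos. }
      lra. }
    apply Rabs_def2 in H. lra. }
  exists k, l. split; [|split].
  - split; [auto|split; [auto|split]].
    + intros ->. 
      assert (Ex : Dx = IZR (z2x - z1x)) by (rewrite minus_IZR; unfold Dx, X1, X2; ring).
      assert (Ey : Dy = IZR (z2y - z1y)) by (rewrite minus_IZR; unfold Dy, Z1, Z2, X1, X2; ring).
      assert (z2x - z1x = 0)%Z by (apply IZR_small; lra).
      assert (z2y - z1y = 0)%Z by (apply IZR_small; lra).
      assert (z2x = z1x) by lia. assert (z2y = z1y) by lia. subst z2x z2y.
      assert (X1 = X2) by (unfold X1, X2; ring). unfold Z1, Z2 in HZ1, HZ2. rewrite H1 in HZ1. lra.
    + unfold tdist. rewrite Htd. cbn [fst snd]. apply Rle_trans with (tdist (p i) (p j)); auto.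
      unfold tdist. apply sqrt_le_1_alt. fold d1 d2. nra.
  - intros [[-> _]|[-> _]].
    + apply (Hne i z1x z1y); auto.
    + apply (Hne j z1x z1y); auto.
  - exists (/2 + XP / d1), t. split; auto. split; auto.
    exists z1x, z1y. unfold seg_pt. rewrite Htd. cbn [fst snd]. fold d1 d2. split.
    + unfold XP, Dx, X1, M1. field. auto.
    + assert (E : (/2 + XP / d1) * d2 = d2 / 2 + s * XP) by (unfold s; field; auto).
      replace (snd (p i) + (/ 2 + XP / d1) * d2 - (snd (p k) + t * Dy))
        with (M2 + s * XP - snd (p k) - t * Dy) by (unfold M2; rewrite E; field).
      unfold XP, Dy. 
      replace (IZR z1y) with (Z1 + (M2 + s * X1) - snd (p k)) by (unfold Z1; ring).
      assert (t * (Z2 - Z1) = - Z1) by lra.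
      replace (M2 + s * (X1 + t * (X2 - X1)) - snd (p k) - t * (Z2 + s * X2 - (Z1 + s * X1)))
        with (M2 + s * X1 - snd (p k) - t * (Z2 - Z1)) by ring.
      lra.
Qed.

Lemma Int_part_bounds x : IZR (Int_part x) <= x < IZR (Int_part x) + 1.
Proof. destruct (base_Int_part x). lra. Qed.

Lemma core_cell (g L s sg M1 M2 xl zb x y : R) (w h c e : nat) (A0 B0 : Z) :
  0 < g -> 0 < L -> -1 <= s <= 1 -> s - 1/100 < sg <= s ->
  (INR w + 1) * g <= L ->
  (c < w)%nat -> (e < h)%nat ->
  A0 = (Int_part ((M1 + xl) / g) + 1)%Z ->
  B0 = (Int_part ((M2 + s * (IZR A0 * g - M1) + zb) / g) + 1)%Z ->
  (IZR A0 + INR c) * g <= x <= (IZR A0 + INR c + 1) * g ->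
  (IZR B0 + IZR (Int_part (sg * INR c)) + INR e) * g <= y <=
     (IZR B0 + IZR (Int_part (sg * INR c)) + INR e + 1) * g ->
  xl <= x - M1 <= xl + (INR w + 1) * g /\
  zb - L / 100 - 2 * g <= y - M2 - s * (x - M1) <= zb + (INR h + 2) * g.
Proof.
  intros Hg HL Hs Hsg Hw Hc He HA HB Hx Hy.
  destruct (Int_part_bounds ((M1 + xl) / g)) as [Ha1 Ha2].
  rewrite <- (Z.add_simpl_r (Int_part ((M1 + xl) / g)) 1), <- HA, minus_IZR in Ha1, Ha2.
  assert (HA' : M1 + xl < IZR A0 * g <= M1 + xl + g).
  { split.
    - apply (Rmult_lt_reg_r (/ g)); [apply Rinv_0_lt_compat; auto|].
      rewrite Rmult_assoc, Rinv_r by lra. rewrite Rmult_1_r. unfold Rdiv in Ha2. lra.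
    - apply (Rmult_le_reg_r (/ g)); [apply Rinv_0_lt_compat; auto|].
      rewrite Rmult_assoc, Rinv_r by lra. rewrite Rmult_1_r, Rmult_plus_distr_r, Rinv_r by lra.
      unfold Rdiv in Ha1. lra. }
  set (X0 := IZR A0 * g - M1) in *.
  destruct (Int_part_bounds ((M2 + s * X0 + zb) / g)) as [Hb1 Hb2].
  rewrite <- (Z.add_simpl_r (Int_part ((M2 + s * X0 + zb) / g)) 1), <- HB, minus_IZR in Hb1, Hb2.
  assert (HB' : M2 + s * X0 + zb < IZR B0 * g <= M2 + s * X0 + zb + g).
  { split.
    - apply (Rmult_lt_reg_r (/ g)); [apply Rinv_0_lt_compat; auto|].
      rewrite Rmult_assoc, Rinv_r by lra. rewrite Rmult_1_r. unfold Rdiv in Hb2. lra.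
    - apply (Rmult_le_reg_r (/ g)); [apply Rinv_0_lt_compat; auto|].
      rewrite Rmult_assoc, Rinv_r by lra. rewrite Rmult_1_r, Rmult_plus_distr_r, Rinv_r by lra.
      unfold Rdiv in Hb1. lra. }
  destruct (Int_part_bounds (sg * INR c)) as [Hi1 Hi2].
  set (I := IZR (Int_part (sg * INR c))) in *.
  assert (Hcw : INR c + 1 <= INR w) by (rewrite <- S_INR; apply le_INR; lia).
  assert (Heh : INR e + 1 <= INR h) by (rewrite <- S_INR; apply le_INR; lia).
  assert (Hc0 : 0 <= INR c) by apply pos_INR.
  assert (He0 : 0 <= INR e) by apply pos_INR.
  set (th := x - M1 - X0 - INR c * g).
  assert (Hth : 0 <= th <= g) by (unfold th, X0; nra).
  assert (Hsth : - g <= s * th <= g) by nra.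
  assert (Hcg : 0 <= INR c * g <= L) by nra.
  assert (Hsc : - (1/100) * L <= (sg - s) * (INR c * g) <= 0) by nra.
  split.
  - unfold X0 in *. nra.
  - replace (y - M2 - s * (x - M1)) with (y - M2 - s * X0 - s * (INR c * g) - s * th)
      by (unfold th; ring).
    assert (Hy1 : (IZR B0 + sg * INR c - 1 + INR e) * g <= y) by nra.
    assert (Hy2 : y <= (IZR B0 + sg * INR c + INR e + 1) * g) by nra.
    split; nra.
Qed.

Definition sgm (jn : nat) : R := (INR jn - 100) / 100.

Definition rho (N b0 jn : nat) (c : nat) : nat :=
  Z.to_nat ((Z.of_nat b0 + Int_part (sgm jn * INR c)) mod Z.of_nat N).

Lemma rho_lt N b0 jn c : (0 < N)%nat -> (rho N b0 jn c < N)%nat.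
Proof.
  intros HN. unfold rho. destruct (Z.mod_pos_bound (Z.of_nat b0 + Int_part (sgm jn * INR c)) (Z.of_nat N)); lia.
Qed.

Lemma zmod_nat A N : (0 < N)%nat ->
  Z.of_nat (Z.to_nat (A mod Z.of_nat N)) = (A - Z.of_nat N * (A / Z.of_nat N))%Z.
Proof.
  intros HN. destruct (Z.mod_pos_bound A (Z.of_nat N)); [lia|].
  rewrite Z2Nat.id by lia. pose proof (Z.div_mod A (Z.of_nat N)). lia.
Qed.

Lemma shift_cell N a x z : (0 < N)%nat ->
  INR a / INR N <= x <= INR (S a) / INR N ->
  IZR (Z.of_nat a + Z.of_nat N * z) / INR N <= x + IZR z <= (IZR (Z.of_nat a + Z.of_nat N * z) + 1) / INR N.
Proof.
  intros HN H. assert (0 < INR N) by (apply lt_0_INR; auto).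
  rewrite plus_IZR, mult_IZR, <- !INR_IZR_INZ. rewrite S_INR in H.
  replace ((INR a + INR N * IZR z) / INR N) with (INR a / INR N + IZR z) by (field; lra).
  replace ((INR a + INR N * IZR z + 1) / INR N) with ((INR a + 1) / INR N + IZR z) by (field; lra).
  lra.
Qed.

Lemma cell_translate N w h (A0 B0 : Z) jn a b x y :
  (0 < N)%nat -> (a < N)%nat -> (b < N)%nat ->
  INR a / INR N <= x <= INR (S a) / INR N ->
  INR b / INR N <= y <= INR (S b) / INR N ->
  inS N w h (Z.to_nat (A0 mod Z.of_nat N)) (rho N (Z.to_nat (B0 mod Z.of_nat N)) jn) a b ->
  exists c e zx zy, (c < w)%nat /\ (e < h)%nat /\
    (IZR A0 + INR c) / INR N <= x + IZR zx <= (IZR A0 + INR c + 1) / INR N /\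
    (IZR B0 + IZR (Int_part (sgm jn * INR c)) + INR e) / INR N <= y + IZR zy <=
    (IZR B0 + IZR (Int_part (sgm jn * INR c)) + INR e + 1) / INR N.
Proof.
  intros HN Ha Hb Hx Hy [Hc He].
  set (a0 := Z.to_nat (A0 mod Z.of_nat N)) in *.
  set (b0 := Z.to_nat (B0 mod Z.of_nat N)) in *.
  set (c := ((a + N - a0) mod N)%nat) in *.
  set (e := ((b + N - rho N b0 jn c) mod N)%nat) in *.
  assert (Ha0 : Z.of_nat a0 = (A0 - Z.of_nat N * (A0 / Z.of_nat N))%Z) by (apply zmod_nat; auto).
  assert (Hb0 : Z.of_nat b0 = (B0 - Z.of_nat N * (B0 / Z.of_nat N))%Z) by (apply zmod_nat; auto).
  assert (Ha0N : (a0 < N)%nat).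
  { unfold a0. destruct (Z.mod_pos_bound A0 (Z.of_nat N)); lia. }
  assert (Hrho := rho_lt N b0 jn c HN).
  pose proof (Nat.div_mod_eq (a + N - a0) N) as Ec. fold c in Ec.
  pose proof (Nat.div_mod_eq (b + N - rho N b0 jn c) N) as Ee. fold e in Ee.
  set (I := Int_part (sgm jn * INR c)).
  assert (Er : Z.of_nat (rho N b0 jn c) = (Z.of_nat b0 + I - Z.of_nat N * ((Z.of_nat b0 + I) / Z.of_nat N))%Z).
  { unfold rho. fold I. apply zmod_nat; auto. }
  exists c, e.
  exists (A0 / Z.of_nat N + 1 - Z.of_nat ((a + N - a0) / N))%Z.
  exists (B0 / Z.of_nat N + 1 + (Z.of_nat b0 + I) / Z.of_nat N - Z.of_nat ((b + N - rho N b0 jn c) / N))%Z.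
  split; auto. split; auto. split.
  - replace (IZR A0 + INR c) with
      (IZR (Z.of_nat a + Z.of_nat N * (A0 / Z.of_nat N + 1 - Z.of_nat ((a + N - a0) / N)))).
    2:{ rewrite INR_IZR_INZ, <- plus_IZR. f_equal. lia. }
    apply shift_cell; auto.
  - fold I. replace (IZR B0 + IZR I + INR e) with
      (IZR (Z.of_nat b + Z.of_nat N * (B0 / Z.of_nat N + 1 + (Z.of_nat b0 + I) / Z.of_nat N
         - Z.of_nat ((b + N - rho N b0 jn c) / N)))).
    2:{ rewrite INR_IZR_INZ, <- !plus_IZR. f_equal. lia. }
    apply shift_cell; auto.
Qed.

Definition emptyF (n N w h : nat) (p : config) (a0 b0 jn : nat) : Prop :=
  forall k, (k < n)%nat ->
    ~ inS N w h a0 (rho N b0 jn) (cellidx N (fst (p k))) (cellidx N (snd (p k))).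

Lemma region_of_cell n N w h p k (A0 B0 : Z) jn g L s sg M1 M2 xl zb :
  (0 < N)%nat -> g = / INR N -> in_cube n p -> (k < n)%nat ->
  0 < L -> -1 <= s <= 1 -> sg = sgm jn -> s - 1/100 < sg <= s ->
  (INR w + 1) * g <= L ->
  A0 = (Int_part ((M1 + xl) / g) + 1)%Z ->
  B0 = (Int_part ((M2 + s * (IZR A0 * g - M1) + zb) / g) + 1)%Z ->
  inS N w h (Z.to_nat (A0 mod Z.of_nat N)) (rho N (Z.to_nat (B0 mod Z.of_nat N)) jn)
      (cellidx N (fst (p k))) (cellidx N (snd (p k))) ->
  exists zx zy,
    xl <= fst (p k) + IZR zx - M1 <= xl + (INR w + 1) * g /\
    zb - L / 100 - 2 * g <= snd (p k) + IZR zy - M2 - s * (fst (p k) + IZR zx - M1)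
      <= zb + (INR h + 2) * g.
Proof.
  intros HN Hg Hcube Hk HL Hs Hsg Hsg' Hw HA HB Hin.
  assert (0 < INR N) by (apply lt_0_INR; auto).
  destruct (Hcube k Hk) as [Hx Hy].
  destruct (cellidx_spec N _ HN Hx) as [Ha Hxa].
  destruct (cellidx_spec N _ HN Hy) as [Hb Hyb].
  destruct (cell_translate N w h A0 B0 jn _ _ _ _ HN Ha Hb Hxa Hyb Hin)
    as [c [e [zx [zy [Hc [He [Hx' Hy']]]]]]].
  exists zx, zy.
  assert (Hg0 : 0 < g) by (rewrite Hg; apply Rinv_0_lt_compat; auto).
  subst sg.
  apply (core_cell g L s (sgm jn) M1 M2 xl zb _ _ w h c e A0 B0); auto.
  - rewrite Hg; exact Hx'.
  - rewrite Hg; exact Hy'.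
Qed.

Lemma geom_main n r p i j N w h L :
  (0 < N)%nat -> 0 < L <= 1/100 ->
  (INR w + 1) / INR N <= 46/100 * L -> (INR h + 4) / INR N <= 33/100 * L ->
  in_cube n p -> free_edge n r p i j ->
  let d1 := fst (tdisp (p i) (p j)) in let d2 := snd (tdisp (p i) (p j)) in
  L ^ 2 <= d1 ^ 2 + d2 ^ 2 -> d2 ^ 2 <= d1 ^ 2 ->
  exists a0 b0 jn, (a0 < N)%nat /\ (b0 < N)%nat /\ (jn <= 200)%nat /\ emptyF n N w h p a0 b0 jn.
Proof.
  intros HN HL Hw Hh Hcube [[Hi [Hj [Hij Hr]]] Hfree] d1 d2 HLd Hd21.
  assert (HN' : 0 < INR N) by (apply lt_0_INR; auto).
  set (g := / INR N).
  assert (Hg0 : 0 < g) by (apply Rinv_0_lt_compat; auto).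
  assert (Hw' : (INR w + 1) * g <= 46/100 * L) by exact Hw.
  assert (Hh' : (INR h + 4) * g <= 33/100 * L) by exact Hh.
  assert (Hd1 : d1 <> 0) by (intro E; rewrite E in *; nra).
  set (s := d2 / d1).
  assert (Hs : -1 <= s <= 1).
  { assert (s ^ 2 <= 1).
    { unfold s. unfold Rdiv. rewrite Rpow_mult_distr, pow_inv.
      apply (Rmult_le_reg_r (d1 ^ 2)); [nra|]. rewrite Rmult_assoc, Rinv_l by (apply pow_nonzero; auto). lra. }
    nra. }
  set (M1 := fst (p i) + d1 / 2). set (M2 := snd (p i) + d2 / 2).
  set (jj := Int_part (s * 100)).
  destruct (Int_part_bounds (s * 100)) as [Hj1 Hj2]. fold jj in Hj1, Hj2.
  assert (Hjj : (-100 <= jj <= 100)%Z).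
  { split; [assert (-101 < jj)%Z by (apply lt_IZR; simpl; lra); lia|apply le_IZR; simpl; lra]. }
  set (jn := Z.to_nat (jj + 100)).
  assert (Hsg : sgm jn = IZR jj / 100).
  { unfold sgm, jn. rewrite INR_IZR_INZ, Z2Nat.id by lia. rewrite plus_IZR. simpl. field. }
  assert (Hsg' : s - 1/100 < sgm jn <= s) by (rewrite Hsg; split; [apply (Rmult_lt_reg_r 100)|apply (Rmult_le_reg_r 100)]; lra || (unfold Rdiv; lra)).
  set (al := if Rle_dec 0 s then cA else cB).
  set (be := if Rle_dec 0 s then cB else cA).
  assert (Hab : (0 <= s /\ al = cA /\ be = cB) \/ (s < 0 /\ al = cB /\ be = cA)).
  { unfold al, be. destruct (Rle_dec 0 s); [left|right]; repeat split; auto; lra. }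
  assert (Hsum : al + be = 46/100) by (unfold cA, cB in Hab; lra).
  set (zbU := cdl * L + L / 100 + 2 * g).
  set (zbD := - cH * L + L / 100 + 2 * g).
  set (AU := (Int_part ((M1 + - al * L) / g) + 1)%Z).
  set (BU := (Int_part ((M2 + s * (IZR AU * g - M1) + zbU) / g) + 1)%Z).
  set (AD := (Int_part ((M1 + - be * L) / g) + 1)%Z).
  set (BD := (Int_part ((M2 + s * (IZR AD * g - M1) + zbD) / g) + 1)%Z).
  assert (Hwl : (INR w + 1) * g <= L) by lra.
  destruct (classic (emptyF n N w h p (Z.to_nat (AU mod Z.of_nat N)) (Z.to_nat (BU mod Z.of_nat N)) jn)) as [HU|HU].
  { exists (Z.to_nat (AU mod Z.of_nat N)), (Z.to_nat (BU mod Z.of_nat N)), jn.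
    destruct (Z.mod_pos_bound AU (Z.of_nat N)); [lia|].
    destruct (Z.mod_pos_bound BU (Z.of_nat N)); [lia|]. repeat split; auto; lia. }
  destruct (classic (emptyF n N w h p (Z.to_nat (AD mod Z.of_nat N)) (Z.to_nat (BD mod Z.of_nat N)) jn)) as [HD|HD].
  { exists (Z.to_nat (AD mod Z.of_nat N)), (Z.to_nat (BD mod Z.of_nat N)), jn.
    destruct (Z.mod_pos_bound AD (Z.of_nat N)); [lia|].
    destruct (Z.mod_pos_bound BD (Z.of_nat N)); [lia|]. repeat split; auto; lia. }
  exfalso. apply Hfree.
  unfold emptyF in HU, HD.
  apply not_all_ex_not in HU. destruct HU as [k HU].
  apply imply_to_and in HU. destruct HU as [Hk HU]. apply NNPP in HU.
  apply not_all_ex_not in HD. destruct HD as [l HD].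
  apply imply_to_and in HD. destruct HD as [Hl HD]. apply NNPP in HD.
  destruct (region_of_cell n N w h p k AU BU jn g L s (sgm jn) M1 M2 (- al * L) zbU
     HN eq_refl Hcube Hk ltac:(lra) Hs eq_refl Hsg' Hwl eq_refl eq_refl HU) as [z1x [z1y [HX1 HZ1]]].
  destruct (region_of_cell n N w h p l AD BD jn g L s (sgm jn) M1 M2 (- be * L) zbD
     HN eq_refl Hcube Hl ltac:(lra) Hs eq_refl Hsg' Hwl eq_refl eq_refl HD) as [z2x [z2y [HX2 HZ2]]].
  apply (crossing n r p i j k l z1x z1y z2x z2y L al be Hi Hj Hij Hk Hl Hr HL HLd Hd21 Hab);
  fold d1 d2 s M1 M2; unfold zbU, zbD in *;
  (destruct Hab as [[_ [Ea Eb]]|[_ [Ea Eb]]]; rewrite Ea, Eb in *; unfold cA, cB, cdl, cH in *; lra).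
Qed.

Lemma tdisp_swp a b : tdisp (swp a) (swp b) = swp (tdisp a b).
Proof. reflexivity. Qed.

Lemma tdist_swp a b : tdist (swp a) (swp b) = tdist a b.
Proof. unfold tdist. rewrite tdisp_swp. simpl. f_equal. ring. Qed.

Lemma is_edge_swap n r p k l : is_edge n r (swapc p) k l <-> is_edge n r p k l.
Proof. unfold is_edge, swapc. rewrite tdist_swp. tauto. Qed.

Lemma crossed_swap n r p i j : crossed n r (swapc p) i j -> crossed n r p i j.
Proof.
  intros [k [l [He [Hne [s [t [Hs [Ht [z1 [z2 [E1 E2]]]]]]]]]]].
  exists k, l. split; [apply is_edge_swap; auto|]. split; auto.
  exists s, t. split; auto. split; auto. exists z2, z1.
  unfold seg_pt, swapc in *. rewrite !tdisp_swp in *. simpl in *. split; auto.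
Qed.

Lemma free_swap n r p i j : free_edge n r p i j -> free_edge n r (swapc p) i j.
Proof.
  intros [He Hc]. split; [apply is_edge_swap; auto|]. intros H. apply Hc. apply crossed_swap; auto.
Qed.

Lemma cube_swap n p : in_cube n p -> in_cube n (swapc p).
Proof. intros H i Hi. destruct (H i Hi). unfold swapc, swp; simpl. auto. Qed.

Definition existsF (n N w h : nat) (p : config) : Prop :=
  exists a0 b0 jn, (a0 < N)%nat /\ (b0 < N)%nat /\ (jn <= 200)%nat /\ emptyF n N w h p a0 b0 jn.

Lemma bad_reduce n r p N w h L :
  (0 < N)%nat -> 0 < L <= 1/100 ->
  (INR w + 1) / INR N <= 46/100 * L -> (INR h + 4) / INR N <= 33/100 * L ->
  L <= sqrt (8 * ln (INR n) / INR n) ->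
  in_cube n p -> bad_event n r p ->
  existsF n N w h p \/ existsF n N w h (swapc p).
Proof.
  intros HN HL Hw Hh HLl Hc [i [j [Hf Hlong]]].
  unfold is_long in Hlong.
  assert (HT : L <= tdist (p i) (p j)) by (eapply Rle_trans; [exact HLl| apply Rge_le; exact Hlong]).
  unfold tdist in HT.
  set (d1 := fst (tdisp (p i) (p j))) in *. set (d2 := snd (tdisp (p i) (p j))) in *.
  assert (HL2 : L ^ 2 <= d1 ^ 2 + d2 ^ 2).
  { assert (0 <= d1 * d1 + d2 * d2) by nra.
    assert (L * L <= sqrt (d1 * d1 + d2 * d2) * sqrt (d1 * d1 + d2 * d2)) by (apply Rmult_le_compat; lra).
    rewrite sqrt_sqrt in H0 by auto. simpl. lra. }
  destruct (Rle_or_lt (d2 ^ 2) (d1 ^ 2)).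
  - left. eapply geom_main; eauto.
  - right. eapply (geom_main n r (swapc p) i j N w h L HN HL Hw Hh (cube_swap n p Hc) (free_swap n r p i j Hf)).
    + unfold swapc. rewrite tdisp_swp. unfold swp. cbn [fst snd]. fold d1 d2. lra.
    + unfold swapc. rewrite tdisp_swp. unfold swp. cbn [fst snd]. fold d1 d2. lra.
Qed.

Definition famlist (N : nat) : list (nat * nat * nat) :=
  flat_map (fun a0 => flat_map (fun b0 => map (fun jn => (a0, b0, jn)) (seq 0 201)) (seq 0 N)) (seq 0 N).

Definition boxesF (n N w h : nat) (F : nat * nat * nat) : list box :=
  match F with (a0, b0, jn) => prodboxes n (allowed N w h a0 (rho N b0 jn)) end.

Definition list1 n N w h := flat_map (boxesF n N w h) (famlist N).

Lemma famlist_length N : length (famlist N) = (N * (N * 201))%nat.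
Proof.
  unfold famlist. rewrite (length_flat_map_const _ _ (N * 201)).
  - rewrite length_seq. auto.
  - intros x _. rewrite (length_flat_map_const _ _ 201).
    + rewrite length_seq; auto.
    + intros y _. rewrite length_map, length_seq. auto.
Qed.

Lemma in_famlist N a0 b0 jn : (a0 < N)%nat -> (b0 < N)%nat -> (jn <= 200)%nat -> In (a0, b0, jn) (famlist N).
Proof.
  intros. unfold famlist. apply in_flat_map. exists a0. split; [apply in_seq; lia|].
  apply in_flat_map. exists b0. split; [apply in_seq; lia|].
  apply in_map. apply in_seq. lia.
Qed.

Lemma vsum_flat_map_const {A} n (f : A -> list box) l a :
  (forall x, In x l -> vsum n (f x) = a) -> vsum n (flat_map f l) = INR (length l) * a.
Proof.
  induction l; intros H; [unfold vsum; simpl; ring|]. cbn [flat_map length].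
  rewrite vsum_app, IHl by (intros; apply H; simpl; auto). rewrite H by (simpl; auto).
  rewrite S_INR. ring.
Qed.

Lemma list1_vsum n N w h : (0 < N)%nat -> (w <= N)%nat -> (h <= N)%nat ->
  vsum n (list1 n N w h) = INR (N * (N * 201)) * (1 - INR w * INR h / (INR N * INR N)) ^ n.
Proof.
  intros HN Hw Hh. unfold list1. rewrite (vsum_flat_map_const _ _ _ ((1 - INR w * INR h / (INR N * INR N)) ^ n)).
  - rewrite famlist_length. auto.
  - intros [[a0 b0] jn] _. simpl. rewrite vsum_prodboxes, allowed_csum; auto.
Qed.

Lemma list1_ok n N w h : (0 < N)%nat -> Forall (box_ok n) (list1 n N w h).
Proof.
  intros HN. unfold list1. rewrite Forall_forall. intros b Hb. apply in_flat_map in Hb.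
  destruct Hb as [[[a0 b0] jn] [_ Hb]]. simpl in Hb.
  pose proof (prodboxes_ok n _ (allowed_ok N w h a0 (rho N b0 jn) HN)) as H.
  rewrite Forall_forall in H. auto.
Qed.

Lemma list1_cover n N w h p : (0 < N)%nat -> in_cube n p -> existsF n N w h p ->
  exists b, In b (list1 n N w h) /\ in_box n b p.
Proof.
  intros HN Hc [a0 [b0 [jn [Ha0 [Hb0 [Hjn He]]]]]].
  destruct (prodboxes_cover n (allowed N w h a0 (rho N b0 jn)) p) as [b [Hb Hib]].
  - intros k Hk. destruct (Hc k Hk). apply allowed_cover; auto.
    intros c; apply rho_lt; auto.
  - exists b. split; auto. unfold list1. apply in_flat_map. exists (a0, b0, jn).
    split; auto. apply in_famlist; auto.
Qed.

Lemma swapbox_ok n b : box_ok n b -> box_ok n (swapbox b).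
Proof. intros H i Hi. destruct (H i Hi). simpl. auto. Qed.

Lemma in_box_swap n b p : in_box n b (swapc p) -> in_box n (swapbox b) p.
Proof. intros H i Hi. destruct (H i Hi). unfold swapc in *. simpl in *. auto. Qed.

Lemma cover_total n N w h (S : config -> Prop) :
  (0 < n)%nat -> (0 < N)%nat -> (w <= N)%nat -> (h <= N)%nat ->
  (forall p, S p -> in_cube n p /\ (existsF n N w h p \/ existsF n N w h (swapc p))) ->
  outer_le n S (2 * (INR (N * (N * 201)) * (1 - INR w * INR h / (INR N * INR N)) ^ n)).
Proof.
  intros Hn HN Hw Hh HS.
  apply (outer_of_list n S (list1 n N w h ++ map swapbox (list1 n N w h))); auto.
  - apply Forall_app. split; [apply list1_ok; auto|].
    rewrite Forall_map. pose proof (list1_ok n N w h HN). rewrite Forall_forall in *.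
    intros; apply swapbox_ok; auto.
  - intros p Hp. destruct (HS p Hp) as [Hc [He|He]].
    + destruct (list1_cover n N w h p HN Hc He) as [b [Hb Hib]].
      exists b. split; auto. apply in_or_app; auto.
    + destruct (list1_cover n N w h (swapc p) HN (cube_swap n p Hc) He) as [b [Hb Hib]].
      exists (swapbox b). split; [apply in_or_app; right; apply in_map; auto|].
      apply in_box_swap; auto.
  - rewrite vsum_app, vsum_swap, list1_vsum by auto. lra.
Qed.

Lemma ln_le_x x : 0 < x -> ln x <= x - 1.
Proof. intros H. pose proof (exp_ineq1_le (ln x)). rewrite exp_ln in H0 by auto. lra. Qed.

Lemma ln_le_sqrt x : 0 < x -> ln x <= 2 * sqrt x.
Proof.
  intros H. assert (Hs : 0 < sqrt x) by (apply sqrt_lt_R0; auto).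
  rewrite <- (sqrt_sqrt x) at 1 by lra. rewrite ln_mult by auto.
  pose proof (ln_le_x _ Hs). lra.
Qed.

Lemma pow_le_exp x n : 0 <= x <= 1 -> (1 - x) ^ n <= exp (- (INR n * x)).
Proof.
  intros Hx. induction n.
  - simpl. rewrite Rmult_0_l, Ropp_0, exp_0. lra.
  - rewrite S_INR. replace (- ((INR n + 1) * x)) with (- (INR n * x) + - x) by ring.
    rewrite exp_plus. simpl. rewrite Rmult_comm.
    apply Rmult_le_compat; try lra.
    + apply pow_le. lra.
    + pose proof (exp_ineq1_le (- x)). lra.
Qed.

Definition Lf (n : nat) : R := sqrt (8 * ln (INR n) / INR n).
Definition Nf (n : nat) : nat := Z.to_nat (up (200 / Lf n)).
Definition wf (n : nat) : nat := Z.to_nat (Int_part (46/100 * Lf n * INR (Nf n)) - 1).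
Definition hf (n : nat) : nat := Z.to_nat (Int_part (33/100 * Lf n * INR (Nf n)) - 4).

Definition Cc : R := 2100000.

Lemma asympt n eps :
  0 < eps -> 4 <= INR n -> 8 * ln (INR n) / INR n <= / 10000 ->
  (ln Cc - ln eps) / (96/1000) <= ln (INR n) ->
  (0 < Nf n)%nat /\ 0 < Lf n <= 1/100 /\
  (INR (wf n) + 1) / INR (Nf n) <= 46/100 * Lf n /\
  (INR (hf n) + 4) / INR (Nf n) <= 33/100 * Lf n /\
  (wf n <= Nf n)%nat /\ (hf n <= Nf n)%nat /\
  2 * (INR (Nf n * (Nf n * 201)) * (1 - INR (wf n) * INR (hf n) / (INR (Nf n) * INR (Nf n))) ^ n) <= eps.
Proof.
  intros Heps Hn Hsmall HT.
  assert (Hn0 : 0 < INR n) by lra.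
  assert (Hln : 1 <= ln (INR n)).
  { assert (ln (exp 1) < ln (INR n)) by (apply ln_increasing; [apply exp_pos|pose proof exp_le_3; lra]).
    rewrite ln_exp in H. lra. }
  set (L := Lf n).
  assert (HL2 : L * L = 8 * ln (INR n) / INR n).
  { unfold L, Lf. apply sqrt_sqrt. unfold Rdiv. apply Rmult_le_pos; [lra|left; apply Rinv_0_lt_compat; lra]. }
  assert (HLpos : 0 < L).
  { unfold L, Lf. apply sqrt_lt_R0. unfold Rdiv. apply Rmult_lt_0_compat; [lra|apply Rinv_0_lt_compat; lra]. }
  assert (HLs : L <= 1/100) by nra.
  destruct (archimed (200 / L)) as [Hu1 Hu2].
  assert (H200 : 200 / L > 200) by (apply (Rmult_gt_reg_r L); auto; unfold Rdiv; rewrite Rmult_assoc, Rinv_l; nra).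
  assert (Hup : (0 < up (200 / L))%Z) by (apply lt_IZR; simpl; lra).
  assert (HNr : INR (Nf n) = IZR (up (200 / L))).
  { unfold Nf. fold L. rewrite INR_IZR_INZ, Z2Nat.id by lia. auto. }
  set (N := Nf n) in *. set (Nr := INR N) in *.
  assert (HN : (0 < N)%nat) by (apply INR_lt; simpl; fold Nr; lra).
  assert (HLN1 : 200 < L * Nr).
  { rewrite HNr. apply (Rmult_lt_reg_r (/ L)); [apply Rinv_0_lt_compat; auto|].
    replace (L * IZR (up (200 / L)) * / L) with (IZR (up (200 / L))) by (field; lra). unfold Rdiv in Hu1. lra. }
  assert (HLN2 : L * Nr <= 201).
  { rewrite HNr. assert (L * IZR (up (200 / L)) <= L * (200 / L + 1)) by (apply Rmult_le_compat_l; lra).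
    replace (L * (200 / L + 1)) with (200 + L) in H by (field; lra). lra. }
  destruct (Int_part_bounds (46/100 * L * Nr)) as [Hq1 Hq2].
  destruct (Int_part_bounds (33/100 * L * Nr)) as [Hr1 Hr2].
  set (q := Int_part (46/100 * L * Nr)) in *. set (q' := Int_part (33/100 * L * Nr)) in *.
  assert (Hq : (91 <= q)%Z) by (apply le_IZR; simpl; lra).
  assert (Hq' : (65 <= q')%Z) by (apply le_IZR; simpl; lra).
  assert (Hw : INR (wf n) = IZR q - 1).
  { unfold wf. fold L N Nr q. rewrite INR_IZR_INZ, Z2Nat.id by lia. rewrite minus_IZR. auto. }
  assert (Hh : INR (hf n) = IZR q' - 4).
  { unfold hf. fold L N Nr q'. rewrite INR_IZR_INZ, Z2Nat.id by lia. rewrite minus_IZR. auto. }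
  set (w := wf n) in *. set (h := hf n) in *.
  assert (HNr0 : 0 < Nr) by lra.
  split; auto. split; [lra|]. split.
  { rewrite Hw. apply (Rmult_le_reg_r Nr); auto. unfold Rdiv. rewrite Rmult_assoc, Rinv_l by lra. lra. }
  split.
  { rewrite Hh. apply (Rmult_le_reg_r Nr); auto. unfold Rdiv. rewrite Rmult_assoc, Rinv_l by lra. lra. }
  split; [apply INR_le; fold Nr; nra|].
  split; [apply INR_le; fold Nr; nra|].
  set (x := INR w * INR h / (Nr * Nr)).
  assert (Hx0 : x * (Nr * Nr) = INR w * INR h) by (unfold x; field; lra).
  assert (Hx1 : 137/1000 * (L * L) <= x).
  { apply (Rmult_le_reg_r (Nr * Nr)); [nra|]. rewrite Hx0, Hw, Hh. nra. }
  assert (Hx2 : x <= 1).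
  { apply (Rmult_le_reg_r (Nr * Nr)); [nra|]. rewrite Hx0, Hw, Hh. nra. }
  rewrite mult_INR, mult_INR. fold Nr. replace (INR 201) with 201 by (simpl; ring).
  assert (Hx0p : 0 <= x) by nra. assert (Hp := pow_le_exp x n (conj Hx0p Hx2)).
  assert (Hnx : INR n * x >= 1096/1000 * ln (INR n)).
  { rewrite HL2 in Hx1. apply Rle_ge. apply Rle_trans with (INR n * (137 / 1000 * (8 * ln (INR n) / INR n))).
    - right. field. lra.
    - apply Rmult_le_compat_l; lra. }
  assert (He : exp (- (INR n * x)) <= exp (- (1096/1000 * ln (INR n)))).
  { destruct (Req_dec (INR n * x) (1096/1000 * ln (INR n))) as [E|E]; [rewrite E; lra|].
    left. apply exp_increasing. lra. }
  assert (HNN : Nr * Nr <= 201 * 201 / (L * L)).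
  { apply (Rmult_le_reg_r (L * L)); [nra|]. replace (201 * 201 / (L * L) * (L * L)) with (201 * 201) by (field; lra). nra. }
  rewrite HL2 in HNN.
  assert (HNN' : Nr * Nr <= 201 * 201 / 8 * INR n).
  { apply Rle_trans with (201 * 201 / (8 * ln (INR n) / INR n)); auto.
    replace (201 * 201 / (8 * ln (INR n) / INR n)) with (201 * 201 / 8 * INR n / ln (INR n)) by (field; lra).
    apply (Rmult_le_reg_r (ln (INR n))); [lra|].
    replace (201 * 201 / 8 * INR n / ln (INR n) * ln (INR n)) with (201 * 201 / 8 * INR n) by (field; lra).
    nra. }
  assert (Hexpn : exp (- (1096/1000 * ln (INR n))) * INR n = exp (- (96/1000 * ln (INR n)))).
  { rewrite <- (exp_ln (INR n)) at 2 by lra. rewrite <- exp_plus. f_equal. lra. }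
  assert (HTe : exp (- (96/1000 * ln (INR n))) <= eps / Cc).
  { assert (ln Cc - ln eps <= 96/1000 * ln (INR n)).
    { apply (Rmult_le_reg_r (/ (96/1000))); [lra|]. replace (96 / 1000 * ln (INR n) * / (96 / 1000)) with (ln (INR n)) by field. exact HT. }
    replace (eps / Cc) with (exp (- (ln Cc - ln eps))).
    - destruct (Req_dec (96 / 1000 * ln (INR n)) (ln Cc - ln eps)) as [E|E]; [rewrite E; lra|].
      left. apply exp_increasing. lra.
    - unfold Rminus. rewrite exp_Ropp, exp_plus, exp_Ropp, !exp_ln by (unfold Cc; lra). field. unfold Cc; lra. }
  assert (Hpow0 : 0 <= (1 - x) ^ n) by (apply pow_le; lra).
  assert (HCc : 2 * (201 * 201 / 8) * 201 <= Cc) by (unfold Cc; lra).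
  apply Rle_trans with (2 * 201 * (201 * 201 / 8 * INR n) * exp (- (1096 / 1000 * ln (INR n)))).
  - replace (2 * (Nr * (Nr * 201) * (1 - x) ^ n)) with (2 * 201 * (Nr * Nr) * (1 - x) ^ n) by ring.
    apply Rmult_le_compat; try nra.
  - replace (2 * 201 * (201 * 201 / 8 * INR n) * exp (- (1096 / 1000 * ln (INR n))))
      with (2 * (201 * 201 / 8) * 201 * (exp (- (1096 / 1000 * ln (INR n))) * INR n)) by field.
    rewrite Hexpn.
    apply Rle_trans with (Cc * (eps / Cc)).
    + apply Rmult_le_compat; try lra. left; apply exp_pos.
    + right. field. unfold Cc; lra.
Qed.

Lemma outer_le_mono n S e1 e2 : e1 <= e2 -> outer_le n S e1 -> outer_le n S e2.
Proof.
  intros H [Bs [H1 [H2 H3]]]. exists Bs. split; [auto|split; [auto|]].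
  intros m. specialize (H3 m). lra.
Qed.

Theorem lemma3 (r : nat -> R) :
  prob_tends_to_0 (fun n p => bad_event n (r n) p).
Proof.
  intros eps Heps.
  set (T := (ln Cc - ln eps) / (96/1000)).
  set (B := 160000 * 160000).
  set (N0 := Z.to_nat (up (Rmax (exp T) B))).
  exists N0. intros n Hn.
  assert (HB : B <= Rmax (exp T) B) by apply Rmax_r.
  assert (HE : exp T <= Rmax (exp T) B) by apply Rmax_l.
  destruct (archimed (Rmax (exp T) B)) as [Hu1 Hu2].
  assert (HupP : (0 < up (Rmax (exp T) B))%Z) by (apply lt_IZR; simpl; unfold B in *; lra).
  assert (HN0 : INR N0 = IZR (up (Rmax (exp T) B))) by (unfold N0; rewrite INR_IZR_INZ, Z2Nat.id by lia; auto).
  assert (Hnr : INR N0 <= INR n) by (apply le_INR; lia).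
  assert (HnB : B < INR n) by lra.
  assert (HnT : exp T < INR n) by lra.
  assert (Hn4 : 4 <= INR n) by (unfold B in *; lra).
  assert (Hn0 : (0 < n)%nat) by (apply INR_lt; simpl; lra).
  assert (HlnT : T <= ln (INR n)).
  { left. rewrite <- (ln_exp T). apply ln_increasing; auto. apply exp_pos. }
  assert (Hsm : 8 * ln (INR n) / INR n <= / 10000).
  { assert (Hs : 160000 <= sqrt (INR n)).
    { rewrite <- (sqrt_square 160000) by lra. apply sqrt_le_1_alt. unfold B in HnB. lra. }
    pose proof (ln_le_sqrt (INR n) ltac:(lra)).
    assert (Hss : sqrt (INR n) * sqrt (INR n) = INR n) by (apply sqrt_sqrt; lra).
    apply (Rmult_le_reg_r (INR n)); [lra|].
    replace (8 * ln (INR n) / INR n * INR n) with (8 * ln (INR n)) by (field; lra).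
    set (sq := sqrt (INR n)) in *. assert (0 <= sq * (sq - 160000)) by (apply Rmult_le_pos; lra). nra. }
  destruct (asympt n eps Heps Hn4 Hsm HlnT) as [HN [HL [Hw [Hh [Hw' [Hh' Hbd]]]]]].
  eapply outer_le_mono; [exact Hbd|].
  apply cover_total; auto.
  intros p [Hc Hbad]. split; auto.
  apply (bad_reduce n (r n) p (Nf n) (wf n) (hf n) (Lf n)); auto.
  unfold Lf. lra.
Qed.
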